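(* Let $c\in\mathbb{F}$ and let $V=V_{\mathrm{Vir}}(c,0)=\bigoplus_{n\ge0}V_n$ be the Virasoro vertex algebra with its grading and $\mathcal{H}$-action (described in the context). Then $L_1^{(n)}V_n=0$ for all $n\ge1$.
   Context: $\mathbb{F}$ is an algebraically closed field of odd prime characteristic $p$. $\mathcal{H}$: let $\mathfrak{sl}_2$ over $\mathbb{C}$ have basis $L_{-1},L_0,L_1$ with $[L_1,L_{-1}]=2L_0$, $[L_0,L_{\pm1}]=\mp L_{\pm1}$; put $L_{\pm1}^{(n)}=L_{\pm1}^n/n!$, $L_0^{(n)}=\binom{-2L_0}{n}$ in $U(\mathfrak{sl}_2)$; $U(\mathfrak{sl}_2)_{\mathbb{Z}}$ is the $\mathbb{Z}$-span of the $L_{-1}^{(i)}L_0^{(j)}L_1^{(k)}$, and $\mathcal{H}=\mathbb{F}\otimes_{\mathbb{Z}}U(\mathfrak{sl}_2)_{\mathbb{Z}}$ (Hopf algebra with $\Delta(L_{\pm1}^{(n)})=\sum_iL_{\pm1}^{(n-i)}\otimes L_{\pm1}^{(i)}$, $\Delta(L_0^{(n)})=\sum_iL_0^{(n-i)}\otimes L_0^{(i)}$, $\varepsilon=\delta_{n,0}$). Virasoro setting: $\mathrm{Vir}$ over $\mathbb{F}$ has basis $\{L_n\}_{n\in\mathbb{Z}}\cup\{\mathbf{c}\}$ with $[L_m,L_n]=(m-n)L_{m+n}+\frac12\binom{m+1}{3}\delta_{m+n,0}\mathbf{c}$, $\mathbf{c}$ central. It is an $\mathcal{H}$-module Lie algebra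 via $L_{\pm1}^{(r)}\mathbf{c}=L_0^{(r)}\mathbf{c}=\delta_{r,0}\mathbf{c}$, $L_{-1}^{(r)}(L_n)=(-1)^r\binom{n+1}{r}L_{n-r}$, $L_1^{(r)}(L_n)=\binom{-n+1}{r}L_{n+r}$, $L_0^{(r)}(L_n)=\binom{2n}{r}L_n$, extended to make $U(\mathrm{Vir})$ an $\mathcal{H}$-module algebra ($b(xy)=\sum(b^{(1)}x)(b^{(2)}y)$, where $\Delta(b)=\sum b^{(1)}\otimes b^{(2)}$). $V_{\mathrm{Vir}}(c,0)=U(\mathrm{Vir})/J_c$, where $J_c$ is the left ideal generated by $\mathbf{c}-c$ and $L_n$ ($n\ge-1$); $J_c$ is an $\mathcal{H}$-submodule, giving the $\mathcal{H}$-action on $V_{\mathrm{Vir}}(c,0)$. The grading is $\deg\mathbf{1}=0$, $\deg L_n=-n$, so $V_n$ is spanned by $L_{-s_1}\cdots L_{-s_r}\mathbf{1}$ with $s_i\ge2$, $\sum s_i=n$, where $\mathbf{1}=1+J_c$. *)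

(* Defs.v *)
From HB Require Import structures.
From mathcomp Require Import all_boot all_order all_algebra.
Set Implicit Arguments. Unset Strict Implicit. Unset Printing Implicit Defensive.
Import Order.TTheory GRing.Theory Num.Theory.
Local Open Scope ring_scope.

Section Vir.
Variable F : fieldType.

(* Generalized binomial coefficient binom(a, j) for a : int, as element of F:
   binom(a,j) = a(a-1)...(a-j+1)/j!.  For a = -(k+1) this equals
   (-1)^j * binom(k+j, j). *)
Definition binomz (a : int) (j : nat) : F :=
  match a with
  | Posz k => ('C(k, j))%:R
  | Negz k => (-1) ^+ j * ('C(k + j, j))%:R
  end.

(* A word [:: m1; ...; mk] stands for the monomial L_{m1} ... L_{mk}
   (in U(Vir), with c already replaced by the scalar c).
   A formal sum is a finite list of (coefficient, word) pairs. *)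
Definition fsum := seq (F * seq int).

Definition fcoef (x : fsum) (w : seq int) : F :=
  \sum_(pr <- x | pr.2 == w) pr.1.

(* Generators of the kernel of  T(span L_n) -> V_Vir(c,0):
   - commutator relations  u (L_m L_n - L_n L_m - [L_m,L_n]) w
     (with central term (1/2) binom(m+1,3) delta_{m+n,0} c);
   - left ideal generators  u L_m  for m >= -1. *)
Definition comm_rel (c : F) (u : seq int) (m n : int) (w : seq int) : fsum :=
  [:: (1, u ++ m :: n :: w);
      (-1, u ++ n :: m :: w);
      (- (m - n)%:~R, u ++ (m + n) :: w);
      (- (2%:R^-1 * binomz (m + 1) 3 * (m + n == 0)%:R * c), u ++ w)].

Definition ann_rel (u : seq int) (m : int) : fsum := [:: (1, rcons u m)].

Definition is_gen (c : F) (y : fsum) : Prop :=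
  (exists u m n w, y = comm_rel c u m n w) \/
  (exists u (m : int), -1 <= m /\ y = ann_rel u m).

(* x represents 0 in V_Vir(c,0) = U(Vir)/J_c: x is an F-linear combination
   of generators of the kernel. *)
Definition inJ (c : F) (x : fsum) : Prop :=
  exists gs : seq (F * fsum),
    (forall g, g \in gs -> is_gen c g.2) /\
    forall w, fcoef x w = \sum_(g <- gs) g.1 * fcoef g.2 w.

(* x is a representative of an element of V_n: a linear combination of
   L_{-s_1} ... L_{-s_r} 1 with all s_i >= 2 and sum s_i = n. *)
Definition in_Vn (n : nat) (x : fsum) : Prop :=
  forall pr, pr \in x ->
    all (fun m : int => m <= -2) pr.2 /\ \sum_(m <- pr.2) (- m) = n%:Z.

(* L_1^{(r)} applied to the monomial L_{m1}...L_{mk} (then to 1) via the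
   iterated coproduct: sum over j_1+...+j_k = r of
   prod_i binom(-m_i+1, j_i) L_{m_1+j_1} ... L_{m_k+j_k} 1,
   using L_1^{(j)} L_m = binom(-m+1, j) L_{m+j} and L_1^{(j)} 1 = delta_{j,0} 1. *)
Fixpoint actw (r : nat) (w : seq int) : fsum :=
  match w with
  | [::] => if r == 0%N then [:: (1, [::])] else [::]
  | m :: w' =>
      flatten [seq [seq (binomz (1 - m) j * q.1, (m + j%:Z) :: q.2)
                   | q <- actw (r - j)%N w'] | j <- iota 0 r.+1]
  end.

Definition L1div (r : nat) (x : fsum) : fsum :=
  flatten [seq [seq (pr.1 * q.1, q.2) | q <- actw r pr.2] | pr <- x].

End Vir.

(* Main.v *)
Require Import Defs.
From HB Require Import structures.
From mathcomp Require Import all_boot all_order all_algebra.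
From mathcomp Require Import zify ring.
Import GRing.Theory Num.Theory.
Set Implicit Arguments. Unset Strict Implicit.
Local Open Scope ring_scope.

Definition wdeg (w : seq int) : int := \sum_(m <- w) (- m).
Definition scl (F : fieldType) (a : F) (x : fsum F) : fsum F :=
  [seq (a * q.1, q.2) | q <- x].
Definition pre (F : fieldType) (k : int) (x : fsum F) : fsum F :=
  [seq (q.1, k :: q.2) | q <- x].

Lemma wdeg_cons m w : wdeg (m :: w) = - m + wdeg w.
Proof. by rewrite /wdeg big_cons. Qed.
Lemma wdeg_cat v w : wdeg (v ++ w) = wdeg v + wdeg w.
Proof. by rewrite /wdeg big_cat. Qed.
Lemma wdeg_nil : wdeg [::] = 0.
Proof. by rewrite /wdeg big_nil. Qed.

Lemma fcoef_nil (F : fieldType) w : fcoef ([::] : fsum F) w = 0.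
Proof. by rewrite /fcoef big_nil. Qed.
Lemma fcoef_cons (F : fieldType) (q : F * seq int) x w :
  fcoef (q :: x) w = (q.2 == w)%:R * q.1 + fcoef x w.
Proof. by rewrite /fcoef big_cons; case: eqP => _; rewrite ?mul1r ?mul0r ?add0r. Qed.
Lemma fcoef_cat (F : fieldType) (x y : fsum F) w : fcoef (x ++ y) w = fcoef x w + fcoef y w.
Proof. by rewrite /fcoef big_cat. Qed.
Lemma fcoef_scl (F : fieldType) a (x : fsum F) w : fcoef (scl a x) w = a * fcoef x w.
Proof.
elim: x => [|q x IH]; first by rewrite /= !fcoef_nil mulr0.
by rewrite /= !fcoef_cons IH /=; ring.
Qed.
Lemma fcoef_pre (F : fieldType) k (x : fsum F) w :
  fcoef (pre k x) w = if w is k' :: w' then (k' == k)%:R * fcoef x w' else 0.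
Proof.
elim: x => [|q x IH]; first by case: w => [|? ?]; rewrite /= !fcoef_nil ?mulr0.
rewrite /= !fcoef_cons IH /=; case: w IH => [|k' w'] _; first by rewrite mul0r add0r.
rewrite fcoef_cons eqseq_cons; case: (k =P k') => [->|ne]; rewrite ?eqxx /=.
  by rewrite !mul1r.
have -> : (k' == k) = false by apply/eqP => e; apply: ne.
by rewrite !mul0r add0r.
Qed.

Lemma inJ_ext (F : fieldType) (c : F) x y :
  (forall w, fcoef x w = fcoef y w) -> inJ c y -> inJ c x.
Proof. move=> e [gs [H1 H2]]; exists gs; split=> // w; by rewrite e. Qed.

Lemma inJ_nil (F : fieldType) (c : F) : inJ c [::].
Proof. exists [::]; split=> // w; by rewrite fcoef_nil big_nil. Qed.

Lemma inJ_zero (F : fieldType) (c : F) x : (forall q, q \in x -> q.1 = 0) -> inJ c x.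
Proof.
move=> H; apply: inJ_ext (inJ_nil c) => w; rewrite fcoef_nil.
elim: x H => [|q x IH] H; first by rewrite fcoef_nil.
rewrite fcoef_cons H ?mem_head // mulr0 add0r IH // => q' hq; apply: H; by rewrite inE hq orbT.
Qed.

Lemma inJ_cat (F : fieldType) (c : F) x y : inJ c x -> inJ c y -> inJ c (x ++ y).
Proof.
move=> [gx [Hx1 Hx2]] [gy [Hy1 Hy2]]; exists (gx ++ gy); split.
  move=> g; rewrite mem_cat => /orP [h|h]; [exact: Hx1 h|exact: Hy1 h].
by move=> w; rewrite fcoef_cat big_cat Hx2 Hy2.
Qed.

Lemma inJ_scl (F : fieldType) (c : F) a x : inJ c x -> inJ c (scl a x).
Proof.
move=> [g [H1 H2]]; exists [seq (a * g.1, g.2) | g <- g]; split.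
  by move=> g' /mapP [g0 hg0 ->]; exact: (H1 _ hg0).
move=> w; rewrite fcoef_scl H2 big_map mulr_sumr; apply: eq_bigr => ? _; by rewrite mulrA.
Qed.

Lemma is_gen_pre (F : fieldType) (c : F) k g : is_gen c g -> is_gen c (pre k g).
Proof.
case=> [[u [m [n [w ->]]]]|[u [m [hm ->]]]].
  by left; exists (k :: u), m, n, w.
by right; exists (k :: u), m.
Qed.

Lemma inJ_pre (F : fieldType) (c : F) k x : inJ c x -> inJ c (pre k x).
Proof.
move=> [g [H1 H2]]; exists [seq (g.1, pre k g.2) | g <- g]; split.
  by move=> g' /mapP [g0 hg0 ->]; apply: is_gen_pre; exact: (H1 _ hg0).
move=> w; rewrite fcoef_pre big_map.
under eq_bigr => g0 _ do rewrite fcoef_pre.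
case: w => [|k' w']; first by rewrite big1 // => ? _; rewrite mulr0.
rewrite H2 mulr_sumr; apply: eq_bigr => ? _; by rewrite mulrCA.
Qed.

Lemma inJ_gen (F : fieldType) (c : F) g : is_gen c g -> inJ c g.
Proof.
move=> hg; exists [:: (1, g)]; split; first by move=> g'; rewrite inE => /eqP ->.
by move=> w; rewrite big_cons big_nil mul1r addr0.
Qed.

Lemma inJ_flatten (F : fieldType) (c : F) (T : eqType) (f : T -> fsum F) s :
  (forall j, j \in s -> inJ c (f j)) -> inJ c (flatten [seq f j | j <- s]).
Proof.
elim: s => [|j s IH] H /=; first exact: (inJ_nil c).
apply: inJ_cat; first by apply: H; rewrite mem_head.
by apply: IH => j' hj; apply: H; rewrite inE hj orbT.
Qed.

Lemma inJ_cons (F : fieldType) (c : F) a u x :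
  inJ c [:: (1, u)] -> inJ c x -> inJ c ((a, u) :: x).
Proof.
move=> h1 h2; apply: inJ_ext (inJ_cat (inJ_scl a h1) h2) => w.
by rewrite /= !fcoef_cons /= mulr1.
Qed.

Definition bad (d : int) : bool := (d < 0) || (d == 1).
Definition nrm (u : seq int) : bool := all (fun m : int => m <= -2) u.

Lemma nrm_wdeg u : nrm u -> (wdeg u = 0) \/ (2 <= wdeg u).
Proof.
elim: u => [|m u IH]; first by rewrite wdeg_nil; left.
rewrite /nrm /= => /andP [hm hu]; right; rewrite wdeg_cons.
case: (IH hu) => h; lia.
Qed.

Lemma nrm_bad u : nrm u -> ~~ bad (wdeg u).
Proof. move/nrm_wdeg; rewrite /bad; case=> h; lia. Qed.

Lemma decomp u : nrm u \/ exists v a t, u = v ++ a :: t /\ -1 <= a /\ nrm t.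
Proof.
elim: u => [|x u [H|[v [a [t [-> [ha ht]]]]]]]; first by left.
- case: (lerP x (-2)) => hx; first by left; rewrite /nrm /= hx.
  right; exists [::], x, u; split => //; split => //; lia.
- by right; exists (x :: v), a, t.
Qed.

Lemma Z_step (F : fieldType) (c : F) n
  (IH : forall u, (size u <= n)%N -> bad (wdeg u) -> inJ c [:: (1, u)]) :
  forall t v a, -1 <= a -> nrm t -> (size (v ++ a :: t) <= n.+1)%N ->
    bad (wdeg (v ++ a :: t)) -> inJ c [:: (1, v ++ a :: t)].
Proof.
elim=> [|b t IHt] v a ha ht hs hb.
  apply: inJ_gen; right; exists v, a; split => //; by rewrite cats1.
move: ht; rewrite /nrm /= => /andP [hbb ht].
set k := 2%:R^-1 * binomz F (a + 1) 3 * (a + b == 0)%:R * c.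
have hrest : inJ c ((1, v ++ b :: a :: t) :: ((a - b)%:~R, v ++ (a + b) :: t)
              :: (k, v ++ t) :: [::]).
  apply: inJ_cons.
    have -> : v ++ b :: a :: t = rcons v b ++ a :: t by rewrite cat_rcons.
    apply: IHt => //.
      by move: hs; rewrite cat_rcons !size_cat.
    by move: hb; rewrite cat_rcons !wdeg_cat !wdeg_cons; congr bad; ring.
  apply: inJ_cons.
    apply: IH; first by move: hs; rewrite !size_cat /=; lia.
    by move: hb; rewrite !wdeg_cat !wdeg_cons; congr bad; ring.
  have [hab|hab] := eqVneq (a + b) 0.
    apply: inJ_cons; last exact: inJ_nil.
    apply: IH; first by move: hs; rewrite !size_cat /=; lia.
    move: hb; rewrite !wdeg_cat !wdeg_cons; congr bad.
    have -> : b = - a by apply/eqP; rewrite -subr_eq0 opprK addrC hab.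
    ring.
  apply: inJ_zero => q; rewrite !inE => /eqP -> /=.
  by rewrite /k (negbTE hab) mulr0 mul0r.
apply: inJ_ext (inJ_cat (inJ_gen (c := c) (g := comm_rel c v a b t) _) hrest).
  move=> w; rewrite /comm_rel /= !fcoef_cons fcoef_nil /= -/k; ring.
by left; exists v, a, b, t.
Qed.

Lemma Z_aux (F : fieldType) (c : F) n :
  forall u, (size u <= n)%N -> bad (wdeg u) -> inJ c [:: (1, u)].
Proof.
elim: n => [|n IH] u hs hb.
  by case: u hs hb => // _; rewrite wdeg_nil /bad Order.POrderTheory.ltxx.
case: (decomp u) => [hn|[v [a [t [eu [ha ht]]]]]].
  by move: (nrm_bad hn); rewrite hb.
rewrite eu in hs hb *; exact: (Z_step IH ha ht hs hb).
Qed.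

Lemma inJ_bad (F : fieldType) (c : F) (x : fsum F) :
  (forall q, q \in x -> bad (wdeg q.2)) -> inJ c x.
Proof.
elim: x => [|[a u] x IH] H; first exact: inJ_nil.
apply: inJ_cons.
  apply: (@Z_aux F c (size u)) => //; exact: (H (a, u) (mem_head _ _)).
by apply: IH => q hq; apply: H; rewrite inE hq orbT.
Qed.

Lemma actw_cons (F : fieldType) r m w : actw F r (m :: w) =
  flatten [seq [seq (binomz F (1 - m) j * q.1, (m + j%:Z) :: q.2)
                   | q <- actw F (r - j) w] | j <- iota 0 r.+1].
Proof. by []. Qed.

Lemma actw_deg (F : fieldType) r w q : q \in actw F r w -> wdeg q.2 = wdeg w - r%:Z.
Proof.
elim: w r q => [|m w IH] r q.
  case: r => [|r] //=; rewrite inE => /eqP -> /=; by rewrite wdeg_nil.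
rewrite actw_cons.
case/flatten_mapP => j hj /mapP [q0 hq0 ->] /=.
move: hj; rewrite mem_iota add0n => /andP [_ hj].
rewrite !wdeg_cons (IH _ _ hq0); lia.
Qed.

Lemma inJ_map (F : fieldType) (c : F) a k y :
  inJ c y -> inJ c [seq (a * q.1, k :: q.2) | q <- y].
Proof. move=> h; have := inJ_pre k (inJ_scl a h); by rewrite /pre /scl -map_comp. Qed.

Lemma nrm_wdeg0 u : nrm u -> wdeg u = 0 -> u = [::].
Proof.
case: u => // m u /andP [hm hu]; rewrite wdeg_cons; case: (nrm_wdeg hu) => h; lia.
Qed.

Lemma main_M (F : fieldType) (c : F) w : forall r : nat,
  nrm w -> wdeg w = r%:Z -> (1 <= r)%N -> inJ c (actw F r w).
Proof.
elim: w => [|m w IH] r.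
  by move=> _; rewrite wdeg_nil => h; lia.
move=> /andP [hm hw]; rewrite wdeg_cons => hr hr1.
have [d hd] : exists d : nat, wdeg w = d%:Z.
  case: (nrm_wdeg hw) => h; [exists 0%N | exists `|wdeg w|%N]; lia.
have [M eM] : exists M : nat, m = - M%:Z by exists `|m|%N; lia.
have erd : r = (M + d)%N by lia.
rewrite actw_cons; apply: inJ_flatten => j; rewrite mem_iota add0n => /andP [_ hj].
case: (ltngtP j M) => [hlt|hgt|heq].
- apply: inJ_map; apply: inJ_bad => q hq; rewrite (actw_deg hq) /bad.
  apply/orP; left; lia.
- case: (ltngtP j M.+1) => [h1|h2|h3]; first lia.
  + apply: inJ_zero => q /mapP [q' _ ->] /=.
    have -> : 1 - m = (M.+1)%:Z by lia.
    by rewrite /= bin_small // ?mul0r.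
  + apply: inJ_map; apply: inJ_bad => q hq; rewrite (actw_deg hq) /bad.
    apply/orP; right; apply/eqP; lia.
- subst j.
  have [d0|dpos] := eqVneq d 0%N.
    subst d; have w0 := nrm_wdeg0 hw hd; subst w.
    have -> : (r - M)%N = 0%N by lia.
    have -> : m + M%:Z = 0 by lia.
    rewrite /=; apply: inJ_cons; last exact: inJ_nil.
    by apply: inJ_gen; right; exists [::], 0.
  apply: inJ_map; apply: IH => //; lia.
Qed.

Theorem lemma5p6 (F : closedFieldType) (p : nat) (hp : prime p) (hodd : odd p)
  (hchar : p \in [pchar F]) (c : F) (n : nat) (hn : (1 <= n)%N) (x : fsum F) :
  in_Vn n x -> inJ c (L1div n x).
Proof.
move=> hx; rewrite /L1div; apply: inJ_flatten => pr hpr.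
have [h1 h2] := hx pr hpr.
exact: (inJ_scl pr.1 (main_M c h1 h2 hn)).
Qed.
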